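(* Let $G$ and $H$ be connected graphs without isolated vertices such that $\gamma_t(H)=2$ and $\gamma_t(G)=\gamma_t(G\Box H)$. Let $V(H)=\{h_1,\ldots,h_n\}$ and let $D$ be a minimum total dominating set of $G\Box H$. Define $D'=\{(g,h)\in D : \text{there exists } h'\in V(H),\ h'\neq h,\ (g,h')\in D\}$, $D''=D\setminus D'$, and $D''_i=\{(g,h)\in D'': h=h_i\}$ for $i\in\{1,\ldots,n\}$. Let $p_G:V(G\Box H)\to V(G)$, $p_G(g,h)=g$, and set $S=p_G(D)$, $S'=p_G(D')$, $S''=p_G(D'')$, $S''_i=p_G(D''_i)$, $P=N_G(S)\setminus S$, $P'=N_G(S')\setminus S'$, $P''=N_G(S'')\setminus S''$. Then: (A) $S\cup P=V(G)$. (B) $\gamma_t(G)=2|S'|+|S''|$. (C) $S'$ is an independent set and no two vertices of $S'$ have a common neighbor in $G$. (D) There are no edges of $G$ between $S'$ and $S''$. (E) There exists a nonnegative integer $k$ such that $G[S'']$ is isomorphic to $kK_2$. (E') If $T'$ is a minimum-size set of vertices of $G$ that totally dominates $S'$ (i.e. $S'\subseteq N_G(T')$), then $T'\subseteq P'$, $|T'|=|S'|$, and $X=S'\cup T'\cup S''$ is a minimum total dominating set of $G$; moreover, for every $g\in S''$, the set $\mathit{pn}_G(g,X)$ is a subset of $S''$ of size $1$. (F) For every $i\in\{1,\ldots,n\}$ there exists a nonnegative integer $k$ such that $G[S''_i]$ is isomorphic to $kK_2$. (G) For every $i\in\{1,\ldots,n\}$, $S''_i$ totally dominates $P''\cup S''_i$,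 i.e. $P''\cup S''_i\subseteq N_G(S''_i)$. (H) For every $i\in\{1,\ldots,n\}$, no two distinct vertices of $S''_i$ have a common neighbor in $G$. (I) No vertex of $S'$ has a common neighbor in $G$ with a vertex of $S''$. (J) The sets $S'$, $S''$, $P'$, $P''$ are pairwise disjoint. (K) $\gamma_t(G[S'\cup P'])=2\gamma(G[S'\cup P'])=2|S'|$. (L) $\gamma_t(G[S''\cup P''])=|S''|$. (M) If $H$ is not isomorphic to $K_2$, then $S'=\emptyset$.
   Context: All graphs are finite, simple and undirected. $N_G(v)$ is the (open) neighborhood of $v$ and $N_G(X)=\bigcup_{v\in X}N_G(v)$. A set $X\subseteq V(G)$ totally dominates $Y\subseteq V(G)$ if $Y\subseteq N_G(X)$; a total dominating set of a graph $G$ without isolated vertices is a set $S$ with $N_G(S)=V(G)$, and the total domination number $\gamma_t(G)$ is the minimum size of such a set. $\gamma(G)$ is the domination number. $G[X]$ is the subgraph induced by $X$. $kK_2$ is the disjoint union of $k$ copies of $K_2$. The Cartesian product $G\Box H$ has vertex set $V(G)\times V(H)$, with $(u_1,v_1)\sim(u_2,v_2)$ iff either $u_1=u_2$ and $v_1v_2\in E(H)$, or $v_1=v_2$ and $u_1u_2\in E(G)$. For $X\subseteq V(G)$ and $u\in X$, $\mathit{pn}_G(u,X)=\{w\in V(G): N_G(w)\cap X=\{u\}\}$ (the $X$-private neighbors of $u$). *)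

(* Defs.v *)
From mathcomp Require Import all_boot.
Set Implicit Arguments. Unset Strict Implicit. Unset Printing Implicit Defensive.

Section Graphs.
Variable T : finType.
Implicit Types (e : rel T) (X Y D : {set T}).

Definition simple_graph e := symmetric e /\ irreflexive e.
Definition connected e := forall x y : T, connect e x y.
Definition no_isolated e := forall x : T, exists y, e x y.

Definition Nb e (v : T) : {set T} := [set w | e v w].
Definition NS e X : {set T} := \bigcup_(v in X) Nb e v.

Definition tdominates e X Y := Y \subset NS e X.
Definition is_tds e D := NS e D == [set: T].
(* total domination number (minimum over total dominating sets; the default
   #|T| is irrelevant for graphs without isolated vertices) *)
Definition gamma_t e : nat := \big[minn/#|T|]_(D : {set T} | is_tds e D) #|D|.
Definition is_min_tds e D := is_tds e D && (#|D| == gamma_t e).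

Definition is_ds e D := D :|: NS e D == [set: T].
Definition gamma e : nat := \big[minn/#|T|]_(D : {set T} | is_ds e D) #|D|.

Definition pn e (u : T) X : {set T} := [set w | Nb e w :&: X == [set u]].

Definition induced e X : rel {x : T | x \in X} := fun x y => e (val x) (val y).
End Graphs.
Arguments induced {T} e X _ _.

Definition cartesian (TG TH : finType) (eG : rel TG) (eH : rel TH) : rel (TG * TH) :=
  fun p q => ((p.1 == q.1) && eH p.2 q.2) || ((p.2 == q.2) && eG p.1 q.1).

(* k K_2 : vertices (i, b), i < k, b : bool; edges (i,b)~(i,~~b) *)
Definition kK2 (k : nat) : rel ('I_k * bool) :=
  fun p q => (p.1 == q.1) && (p.2 != q.2).

Definition isomorphic (T1 T2 : finType) (e1 : rel T1) (e2 : rel T2) :=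
  exists f : T1 -> T2, bijective f /\ forall x y, e1 x y = e2 (f x) (f y).
Arguments kK2 : clear implicits.
Arguments cartesian {TG TH} eG eH _ _.

(* Main.v *)
Require Import Defs.
From mathcomp Require Import all_boot zify.
Set Implicit Arguments. Unset Strict Implicit. Unset Printing Implicit Defensive.

Section Gen.
Variable T : finType.
Implicit Types (e : rel T) (X Y : {set T}).

Lemma inNS e X w : reflect (exists2 v, v \in X & e v w) (w \in NS e X).
Proof.
apply: (iffP bigcupP) => [[v vX]|[v vX ev]]; last by exists v; rewrite // inE.
by rewrite inE => ev; exists v.
Qed.

Lemma NS_mono e X Y : X \subset Y -> NS e X \subset NS e Y.
Proof.
move=> sXY; apply/subsetP => w /inNS [v vX ev]; apply/inNS; exists v => //.
exact: (subsetP sXY).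
Qed.

Lemma bigmin_le (P : pred {set T}) Y : P Y ->
  \big[minn/#|T|]_(D : {set T} | P D) #|D| <= #|Y|.
Proof.
move=> PY; have : Y \in index_enum {set T} by rewrite mem_index_enum.
elim: (index_enum _) => [//|a s IH]; rewrite big_cons inE.
case/orP => [/eqP <-|Ys]; first by rewrite PY geq_minl.
by case: ifP => _; rewrite ?geq_min IH ?orbT.
Qed.

Lemma bigmin_ge (P : pred {set T}) m : m <= #|T| -> (forall Y, P Y -> m <= #|Y|) ->
  m <= \big[minn/#|T|]_(D : {set T} | P D) #|D|.
Proof.
move=> hT hY; apply: (big_ind (fun x => m <= x)) => //.
by move=> x y hx hy; rewrite leq_min hx.
Qed.

Lemma bigmin_leT (P : pred {set T}) : \big[minn/#|T|]_(D : {set T} | P D) #|D| <= #|T|.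
Proof.
apply: (big_ind (fun x => x <= #|T|)) => //; last by move=> i _; exact: max_card.
by move=> x y hx _; rewrite geq_min hx.
Qed.

Lemma gt_le e Y : is_tds e Y -> gamma_t e <= #|Y|.
Proof. exact: bigmin_le. Qed.

Lemma gt_ge e m : (exists Y, is_tds e Y) -> (forall Y, is_tds e Y -> m <= #|Y|) -> m <= gamma_t e.
Proof.
move=> [Y0 hY0] h; apply: bigmin_ge => //.
exact: leq_trans (h _ hY0) (max_card _).
Qed.

Lemma g_le e Y : is_ds e Y -> gamma e <= #|Y|.
Proof. exact: bigmin_le. Qed.

Lemma g_ge e m : (exists Y, is_ds e Y) -> (forall Y, is_ds e Y -> m <= #|Y|) -> m <= gamma e.
Proof.
move=> [Y0 hY0] h; apply: bigmin_ge => //.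
exact: leq_trans (h _ hY0) (max_card _).
Qed.

Lemma gt_leT e : gamma_t e <= #|T|.
Proof. exact: bigmin_leT. Qed.

End Gen.

Section Induced.
Variables (T : finType) (e : rel T) (U : {set T}).
Local Notation sT := {x : T | x \in U}.
Local Notation e' := (induced e U).
Implicit Types (Y Z : {set T}).

Lemma card_val (Z0 : {set sT}) : #|[set val x | x in Z0]| = #|Z0|.
Proof. by apply: card_imset; exact: val_inj. Qed.

Lemma preim_val Y : Y \subset U -> [set val x | x in [set x : sT | val x \in Y]] = Y.
Proof.
move=> sYU; apply/setP => w; apply/imsetP/idP => [[x]|wY].
  by rewrite inE => xY ->.
have wU : w \in U := subsetP sYU w wY.
by exists (exist _ w wU) => //; rewrite inE.
Qed.

Lemma ind_tds_up Y : Y \subset U -> U \subset NS e Y -> gamma_t e' <= #|Y|.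
Proof.
move=> sYU sUN.
set Y0 := [set x : sT | val x \in Y].
rewrite -(preim_val sYU) card_val; apply: gt_le.
apply/eqP/setP => x; rewrite inE; apply/inNS.
have /inNS [v vY ev] := subsetP sUN _ (valP x).
have vU : v \in U := subsetP sYU v vY.
by exists (exist _ v vU); rewrite // inE.
Qed.

Lemma ind_tds_low (Z0 : {set sT}) : is_tds e' Z0 ->
  [set val x | x in Z0] \subset U /\ U \subset NS e [set val x | x in Z0].
Proof.
move=> /eqP hZ; split.
  by apply/subsetP => w /imsetP [x _ ->]; exact: valP.
apply/subsetP => w wU.
have : (exist _ w wU : sT) \in NS e' Z0 by rewrite hZ.
move=> /inNS [v vZ ev]; apply/inNS; exists (val v) => //.
exact: imset_f.
Qed.

Lemma ind_ds_up Y : Y \subset U -> U \subset Y :|: NS e Y -> gamma e' <= #|Y|.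
Proof.
move=> sYU sUN.
set Y0 := [set x : sT | val x \in Y].
rewrite -(preim_val sYU) card_val; apply: g_le.
apply/eqP/setP => x; rewrite !inE.
have /setUP [vY|/inNS [v vY ev]] := subsetP sUN _ (valP x).
  by rewrite vY.
have vU : v \in U := subsetP sYU v vY.
apply/orP; right; apply/inNS; by exists (exist _ v vU); rewrite // inE.
Qed.

Lemma ind_ds_low (Z0 : {set sT}) : is_ds e' Z0 ->
  [set val x | x in Z0] \subset U /\ U \subset [set val x | x in Z0] :|: NS e [set val x | x in Z0].
Proof.
move=> /eqP hZ; split.
  by apply/subsetP => w /imsetP [x _ ->]; exact: valP.
apply/subsetP => w wU.
have : (exist _ w wU : sT) \in Z0 :|: NS e' Z0 by rewrite hZ.
move=> /setUP [xZ|/inNS [v vZ ev]]; apply/setUP.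
  by left; apply/imsetP; exists (exist _ w wU).
right; apply/inNS; exists (val v) => //.
exact: imset_f.
Qed.

Lemma ind_gt_eq m : (exists Y, [/\ Y \subset U, U \subset NS e Y & #|Y| <= m]) ->
  (forall Z, Z \subset U -> U \subset NS e Z -> m <= #|Z|) -> gamma_t e' = m.
Proof.
move=> [Y [h1 h2 h3]] hlow; apply/eqP; rewrite eqn_leq.
rewrite (leq_trans (ind_tds_up h1 h2) h3) /=.
apply: gt_ge.
  exists [set x : sT | val x \in Y]; apply/eqP/setP => x; rewrite inE; apply/inNS.
  have /inNS [v vY ev] := subsetP h2 _ (valP x).
  have vU : v \in U := subsetP h1 v vY.
  by exists (exist _ v vU); rewrite // inE.
move=> Z0 hZ0; have [a b] := ind_tds_low hZ0.
by rewrite -card_val; apply: hlow.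
Qed.

Lemma ind_g_eq m : (exists Y, [/\ Y \subset U, U \subset Y :|: NS e Y & #|Y| <= m]) ->
  (forall Z, Z \subset U -> U \subset Z :|: NS e Z -> m <= #|Z|) -> gamma e' = m.
Proof.
move=> [Y [h1 h2 h3]] hlow; apply/eqP; rewrite eqn_leq.
rewrite (leq_trans (ind_ds_up h1 h2) h3) /=.
apply: g_ge.
  exists [set x : sT | val x \in Y]; apply/eqP/setP => x; rewrite !inE.
  have /setUP [vY|/inNS [v vY ev]] := subsetP h2 _ (valP x).
    by rewrite vY.
  have vU : v \in U := subsetP h1 v vY.
  apply/orP; right; apply/inNS; by exists (exist _ v vU); rewrite // inE.
move=> Z0 hZ0; have [a b] := ind_ds_low hZ0.
by rewrite -card_val; apply: hlow.
Qed.
End Induced.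

Section Match.
Variables (T : finType) (e : rel T) (U : {set T}) (m : T -> T).
Hypothesis esymm : symmetric e.
Hypothesis eirr : irreflexive e.
Hypothesis hm : forall w, w \in U -> m w \in U /\ e w (m w).
Hypothesis hu : forall w v, w \in U -> v \in U -> e w v -> v = m w.

Lemma mU w : w \in U -> m w \in U. Proof. by move/hm => []. Qed.
Lemma mK w : w \in U -> m (m w) = w.
Proof.
move=> wU; have [mwU ew] := hm wU.
by apply/esym; apply: hu; rewrite // esymm.
Qed.
Lemma mneq w : w \in U -> m w != w.
Proof. by move=> wU; apply/eqP => h; have := (hm wU).2; rewrite h eirr. Qed.

Definition rk (x : T) : nat := enum_rank x.
Definition R := [set w in U | rk w < rk (m w)].
Definition r w := if rk w < rk (m w) then w else m w.

Lemma rk_inj x y : rk x = rk y -> x = y.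
Proof. by move=> /val_inj /enum_rank_inj. Qed.

Lemma rR w : w \in U -> r w \in R.
Proof.
move=> wU; rewrite /r; case: ifP => h; first by rewrite inE wU h.
rewrite inE mU // mK //.
have : rk w != rk (m w) by apply/eqP => /rk_inj /esym /eqP; rewrite (negbTE (mneq wU)).
by move: h; lia.
Qed.

Lemma RU w : w \in R -> w \in U. Proof. by rewrite inE => /andP []. Qed.

Local Notation sT := {x : T | x \in U}.
Local Notation k := #|R|.

Definition gv (p : 'I_k * bool) : T := if p.2 then m (enum_val p.1) else enum_val p.1.
Lemma gvP p : gv p \in U.
Proof. rewrite /gv; have := RU (enum_valP p.1); by case: p.2 => // /mU. Qed.
Definition g (p : 'I_k * bool) : sT := exist _ (gv p) (gvP p).

Lemma rP (x : sT) : r (val x) \in R. Proof. exact: rR (valP x). Qed.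
Definition f (x : sT) : 'I_k * bool :=
  (enum_rank_in (rP x) (r (val x)), val x != r (val x)).

Lemma fK : cancel f g.
Proof.
move=> x; apply: val_inj; rewrite /= /gv /f /= (enum_rankK_in _ (rP x)).
case: x => w wU /=; rewrite /r; case: (rk w < rk (m w)) => /=; first by rewrite eqxx.
by rewrite eq_sym mneq // mK.
Qed.

Lemma gK : cancel g f.
Proof.
move=> [i b]; rewrite /f /g /=.
have yR := enum_valP i; have yU := RU yR.
have hy : rk (enum_val i) < rk (m (enum_val i)) by move: yR; rewrite inE => /andP [].
have key : r (gv (i, b)) = enum_val i.
  rewrite /r /gv /=; case: b; last by rewrite hy.
  by rewrite mK //; case: ifP => //; move: hy; lia.
congr (_, _).
  apply: enum_val_inj; transitivity (r (gv (i, b))); last exact: key.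
  exact: (enum_rankK_in (rP (g (i, b))) (rP (g (i, b)))).
rewrite /= key /gv; clear key; case: b => /=; rewrite ?eqxx ?mneq //.
Qed.

Lemma g_edge p q : e (gv p) (gv q) = kK2 k p q.
Proof.
move: p q => [i b] [j c]; rewrite /kK2 /gv /=.
case: (eqVneq i j) => [<-|nij] /=.
  have yU := RU (enum_valP i).
  case: b; case: c => //=; rewrite ?eirr //.
    by rewrite esymm; exact: (hm yU).2.
  exact: (hm yU).2.
have yR := enum_valP i; have yU := RU yR.
have zR := enum_valP j; have zU := RU zR.
have hy : rk (enum_val i) < rk (m (enum_val i)) by move: yR; rewrite inE => /andP [].
have hz : rk (enum_val j) < rk (m (enum_val j)) by move: zR; rewrite inE => /andP [].
have nyz : enum_val i != enum_val j by apply: contra nij => /eqP /enum_val_inj ->.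
set y := enum_val i in yR yU hy nyz *; set z := enum_val j in zR zU hz nyz *.
apply/negbTE/negP => he.
have [u [v [uU vU huv hu1 hv1]]] : exists u v, [/\ u \in U, v \in U, e u v, u = y \/ u = m y & v = z \/ v = m z].
  exists (if b then m y else y), (if c then m z else z); split => //.
  - by clear he; case: b; rewrite ?mU.
  - by clear he; case: c; rewrite ?mU.
  - by clear he; case: b; [right|left].
  - by clear he; case: c; [right|left].
have vmu := hu uU vU huv.
clear he; case: hu1 => hu1; case: hv1 => hv1; rewrite hu1 hv1 in vmu.
- by move: hy hz; rewrite vmu mK //; lia.
- by move: nyz; rewrite -(mK zU) vmu mK // eqxx.
- by move: nyz; rewrite vmu mK // eqxx.
- have zmy : z = m y.
    transitivity (m (m z)); first by rewrite mK.
    by rewrite vmu mK ?mU.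
  by move: hy hz; rewrite zmy mK //; lia.
Qed.

Lemma match_iso : exists k0, isomorphic (induced e U) (kK2 k0).
Proof.
exists k, f; split; first by exists g; [exact: fK | exact: gK].
move=> x y; rewrite -g_edge /induced.
by rewrite -{1}(fK x) -{1}(fK y).
Qed.
End Match.

Lemma match_iso' (T : finType) (e : rel T) (U : {set T}) :
  symmetric e -> irreflexive e ->
  (forall w, w \in U -> exists g, [/\ g \in U, e w g & forall v, v \in U -> e w v -> v = g]) ->
  exists k0, isomorphic (induced e U) (kK2 k0).
Proof.
move=> es ei H.
pose m w := odflt w [pick g | (g \in U) && e w g].
have hm : forall w, w \in U -> m w \in U /\ e w (m w).
  move=> w wU; rewrite /m; case: pickP => [g /andP [] //|none].
  have [g [gU ewg _]] := H w wU; by move: (none g); rewrite gU ewg.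
apply: (@match_iso T e U m) => // w v wU vU ewv.
have [g [gU ewg u]] := H w wU.
by rewrite (u v vU ewv) (u (m w) (hm w wU).1 (hm w wU).2).
Qed.

Lemma disjP (T : finType) (A B : {set T}) :
  (forall x, x \in A -> x \in B -> False) -> [disjoint A & B].
Proof. move=> H; apply/pred0P => x /=; apply/negP => /andP [a b]; exact: H a b. Qed.

Section Main.
Variables (VG VH : finType) (eG : rel VG) (eH : rel VH).
Hypotheses (sG : simple_graph eG) (sH : simple_graph eH).
Hypotheses (iG : no_isolated eG) (iH : no_isolated eH).
Variable h00 : VH.
Variable D : {set VG * VH}.
Hypothesis Dtds : is_tds (cartesian eG eH) D.
Hypothesis Dcard : gamma_t eG = #|D|.

Definition D' := [set p : VG * VH in D | [exists h' : VH, (h' != p.2) && ((p.1, h') \in D)]].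
Definition D'' := D :\: D'.
Definition D''_ := fun h : VH => [set p in D'' | p.2 == h].
Definition S := [set p.1 | p in D].
Definition S' := [set p.1 | p in D'].
Definition S'' := [set p.1 | p in D''].
Definition S''_ := fun h : VH => [set p.1 | p in D''_ h].
Definition P := NS eG S :\: S.
Definition P' := NS eG S' :\: S'.
Definition P'' := NS eG S'' :\: S''.

Lemma symG x y : eG x y = eG y x. Proof. exact: sG.1. Qed.
Lemma irrG x : eG x x = false. Proof. exact: sG.2. Qed.
Lemma irrH h : eH h h = false. Proof. exact: sH.2. Qed.
Lemma h_other (h : VH) : exists h' : VH, h' != h.
Proof. have [h' e] := iH h; exists h'; apply: contraTneq e => ->; by rewrite irrH. Qed.

Lemma inS g : reflect (exists h, (g,h) \in D) (g \in S).
Proof.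
apply: (iffP imsetP) => [[[a b] pD ->]|[h gh]]; first by exists b.
by exists (g,h).
Qed.

Lemma inS' g : g \in S' -> exists h1 h2, [/\ h1 != h2, (g,h1) \in D & (g,h2) \in D].
Proof.
case/imsetP => [[a h]]; rewrite inE => /andP [pD /existsP [h' /andP [ne h'D]]] -> /=.
by exists h, h'; rewrite eq_sym.
Qed.

Lemma S'_intro g h1 h2 : h1 != h2 -> (g,h1) \in D -> (g,h2) \in D -> g \in S'.
Proof.
move=> ne g1 g2; apply/imsetP; exists (g,h1) => //.
by rewrite inE g1 /=; apply/existsP; exists h2; rewrite eq_sym ne.
Qed.

Lemma inS'' g : g \in S'' -> exists h, (g,h) \in D /\ forall h', (g,h') \in D -> h' = h.
Proof.
case/imsetP => [[a h]]; rewrite /D'' !inE => /andP [nD' pD] -> /=.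
exists h; split => // h' gh'; apply/eqP; apply: contraNT nD' => ne.
by rewrite pD /=; apply/existsP; exists h'; rewrite ne.
Qed.

Lemma S''_uniq g h1 h2 : g \in S'' -> (g,h1) \in D -> (g,h2) \in D -> h1 = h2.
Proof. by move=> /inS'' [h [_ u]] /u -> /u ->. Qed.

Lemma S''_D'' g h : g \in S'' -> (g,h) \in D -> (g,h) \in D''.
Proof.
move=> gS gh; rewrite /D'' !inE gh andbT /=.
apply/negP => /existsP [h' /andP [ne h'D]].
by rewrite (S''_uniq gS h'D gh) eqxx in ne.
Qed.

Lemma S''_intro g h : (g,h) \in D -> (forall h', (g,h') \in D -> h' = h) -> g \in S''.
Proof.
move=> gh u; apply/imsetP; exists (g,h) => //; rewrite /D'' !inE gh andbT /=.
apply/negP => /existsP [h' /andP [ne h'D]]; by move: ne; rewrite (u _ h'D) eqxx.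
Qed.

Lemma S'S''_disj g : g \in S' -> g \in S'' -> False.
Proof.
move=> /inS' [h1 [h2 [ne g1 g2]]] gS.
by move: ne; rewrite (S''_uniq gS g1 g2) eqxx.
Qed.

Lemma S_split g : g \in S -> g \in S' \/ g \in S''.
Proof.
move=> /inS [h gh].
case: (boolP [exists h', (h' != h) && ((g,h') \in D)]) => [/existsP [h' /andP [ne h'D]]|none].
  by left; exact: S'_intro ne h'D gh.
right; apply: (S''_intro gh) => h' h'D; apply/eqP; apply: contraNT none => ne.
by apply/existsP; exists h'; rewrite ne.
Qed.

Lemma S'_S g : g \in S' -> g \in S.
Proof. by move=> /inS' [h1 [h2 [_ g1 _]]]; apply/inS; exists h1. Qed.
Lemma S''_S g : g \in S'' -> g \in S.
Proof. by move=> /inS'' [h [gh _]]; apply/inS; exists h. Qed.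

Lemma inS''_ h g : g \in S''_ h <-> g \in S'' /\ (g,h) \in D.
Proof.
split.
  case/imsetP => [[a b]]; rewrite !inE => /andP [/andP [nD' pD] /eqP /= eb] ->; subst b.
  split => //; apply/imsetP; exists (a,h) => //; by rewrite !inE nD'.
move=> [gS gh]; apply/imsetP; exists (g,h) => //.
by rewrite inE S''_D'' //= eqxx.
Qed.

Lemma card_D'' : #|D''| = #|S''|.
Proof.
rewrite card_in_imset // => [[a b] [c d]] pD qD /= eac; subst c.
have pD0 : (a,b) \in D by move: pD; rewrite inE => /andP [].
have qD0 : (a,d) \in D by move: qD; rewrite inE => /andP [].
have aS : a \in S'' by apply/imsetP; exists (a,b).
by rewrite (S''_uniq aS pD0 qD0).
Qed.

Lemma D'_sub : D' \subset D.
Proof. by apply/subsetP => p; rewrite inE => /andP []. Qed.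

Lemma card_D : #|D| = #|D'| + #|D''|.
Proof. by rewrite -(cardsID D' D) (setIidPr D'_sub). Qed.

Definition cnt s := #|[set p in D' | p.1 == s]|.

Lemma card_D'_sum : #|D'| = \sum_(s in S') cnt s.
Proof.
rewrite -sum1_card (partition_big fst (mem S')) => [|p pD] /=; last exact: imset_f.
apply: eq_bigr => s _; rewrite /cnt -sum1_card; apply: eq_bigl => p.
by rewrite inE.
Qed.

Lemma in_D' g h h' : h' != h -> (g,h) \in D -> (g,h') \in D -> (g,h) \in D'.
Proof. move=> ne gh gh'; rewrite inE gh /=; apply/existsP; exists h'; by rewrite ne. Qed.

Lemma cnt_ge2 s : s \in S' -> 2 <= cnt s.
Proof.
move=> /inS' [h1 [h2 [ne g1 g2]]].
have -> : 2 = #|[set (s,h1); (s,h2)]|.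
  by rewrite cards2; case: eqP => // [[]] /eqP; rewrite (negbTE ne).
apply: subset_leq_card; apply/subsetP => p; rewrite in_set2 => /orP [] /eqP ->; rewrite in_set /= eqxx andbT.
  by apply: (in_D' _ g1 g2); rewrite eq_sym.
by apply: (in_D' ne g2 g1).
Qed.

Lemma cnt_geV s : (forall h, (s,h) \in D) -> #|VH| <= cnt s.
Proof.
move=> all.
have -> : #|VH| = #|[set (s,h) | h in [set: VH]]|.
  by rewrite card_imset ?cardsT // => a b [].
apply: subset_leq_card; apply/subsetP => p /imsetP [h _ ->].
rewrite inE eqxx andbT; have [h' ne] := h_other h; exact: in_D' ne (all h) (all h').
Qed.

Lemma D_lb : 2 * #|S'| + #|S''| <= #|D|.
Proof.
rewrite card_D card_D'' leq_add2r card_D'_sum mulnC -sum_nat_const.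
by apply: leq_sum => s sS; exact: cnt_ge2.
Qed.

Lemma dom g h : exists2 p, p \in D & cartesian eG eH p (g,h).
Proof.
have : (g,h) \in NS (cartesian eG eH) D by rewrite (eqP Dtds) inE.
by case/inNS => p pD hp; exists p.
Qed.

Lemma F1 g : g \in S \/ exists2 s, s \in S & eG s g.
Proof.
have [[a b] pD] := dom g h00; rewrite /cartesian /= => /orP [/andP [/eqP ea _]|/andP [_ e]].
  by left; apply/inS; exists b; rewrite -ea.
by right; exists a => //; apply/inS; exists b.
Qed.

Lemma F2 g h : g \in S'' -> (g,h) \in D -> exists2 g', (g',h) \in D & eG g' g.
Proof.
move=> gS gh; have [[a b] pD] := dom g h.
rewrite /cartesian /= => /orP [/andP [/eqP ea e]|/andP [/eqP eb e]].
  subst a; by rewrite (S''_uniq gS pD gh) irrH in e.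
by subst b; exists a.
Qed.

Lemma F3 w h : w \notin S -> exists2 g', (g',h) \in D & eG g' w.
Proof.
move=> wS; have [[a b] pD] := dom w h.
rewrite /cartesian /= => /orP [/andP [/eqP ea e]|/andP [/eqP eb e]].
  by subst a; case/negP: wS; apply/inS; exists b.
by subst b; exists a.
Qed.

Definition f0 (s : VG) : VG := odflt s [pick y | eG s y].
Lemma f0P s : eG s (f0 s).
Proof.
rewrite /f0; case: pickP => [y //|none].
by have [y hy] := iG s; rewrite none in hy.
Qed.

Definition X (T : {set VG}) := S' :|: T :|: S''.
Implicit Types (T : {set VG}).

Lemma S_X T s : s \in S -> s \in X T.
Proof. by move=> /S_split [] h; rewrite /X !inE h ?orbT. Qed.
Lemma S''_X T s : s \in S'' -> s \in X T.
Proof. by move=> h; rewrite /X !inE h ?orbT. Qed.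
Lemma T_X T s : s \in T -> s \in X T.
Proof. by move=> h; rewrite /X !inE h ?orbT. Qed.

Lemma X_tds T : S' \subset NS eG T -> is_tds eG (X T).
Proof.
move=> hT; apply/eqP/setP => w; rewrite inE; apply/inNS.
case: (F1 w) => [wS|[s sS ew]]; last by exists s => //; exact: S_X.
case: (S_split wS) => [w1|w2].
  have /inNS [v vT ev] := subsetP hT w w1; by exists v => //; exact: T_X.
have [h [wh _]] := inS'' w2; have [g' g'h eg] := F2 w2 wh.
by exists g' => //; apply: S_X; apply/inS; exists h.
Qed.

Lemma GL T : S' \subset NS eG T -> #|T| <= #|S'| ->
  [/\ #|X T| = #|D|, #|T| = #|S'|, [disjoint S' & T], [disjoint S' :|: T & S''] &
      #|D| = 2 * #|S'| + #|S''|].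
Proof.
move=> hT hc.
have h1 := gt_le (X_tds hT); rewrite Dcard in h1.
have [l1 e1] := leq_card_setU (S' :|: T) S''.
have [l2 e2] := leq_card_setU S' T.
have lb := D_lb.
rewrite /X in h1 *.
split.
all: try lia.
Qed.

Definition Tof (F : VG -> VG) := [set F s | s in S'].

Lemma Tof_dom F : (forall s, s \in S' -> eG s (F s)) -> S' \subset NS eG (Tof F).
Proof.
move=> hF; apply/subsetP => s sS; apply/inNS; exists (F s); first exact: imset_f.
by rewrite symG hF.
Qed.

Lemma Tof_card F : #|Tof F| <= #|S'|.
Proof. exact: leq_imset_card. Qed.

Lemma noS'S'' x y : x \in S' -> y \in S'' -> ~~ eG x y.
Proof.
move=> xS yS; apply/negP => exy.
pose F s := if s == x then y else f0 s.
have hF : forall s, s \in S' -> eG s (F s).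
  by move=> s _; rewrite /F; case: eqP => [->|_] //; exact: f0P.
have [_ _ _ d _] := GL (Tof_dom hF) (Tof_card F).
have : y \in S' :|: Tof F by rewrite inE; apply/orP; right; apply/imsetP; exists x; rewrite // /F eqxx.
by rewrite (disjointFl d yS).
Qed.

Lemma S'_indep x y : x \in S' -> y \in S' -> ~~ eG x y.
Proof.
move=> xS yS; apply/negP => exy.
pose F s := if s == x then y else f0 s.
have hF : forall s, s \in S' -> eG s (F s).
  by move=> s _; rewrite /F; case: eqP => [->|_] //; exact: f0P.
have [_ _ d _ _] := GL (Tof_dom hF) (Tof_card F).
have : y \in Tof F by apply/imsetP; exists x; rewrite // /F eqxx.
by rewrite (disjointFr d yS).
Qed.

Lemma S'_nocommon x y z : x \in S' -> y \in S' -> x != y -> ~~ (eG x z && eG y z).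
Proof.
move=> xS yS ne; apply/negP => /andP [ex ey].
pose F s := if s == x then z else if s == y then z else f0 s.
have hF : forall s, s \in S' -> eG s (F s).
  by move=> s _; rewrite /F; case: eqP => [->|_] //; case: eqP => [->|_] //; exact: f0P.
have [_ hc _ _ _] := GL (Tof_dom hF) (Tof_card F).
have /imset_injP inj : #|Tof F| == #|S'| by rewrite hc.
have := inj x y xS yS; rewrite /F !eqxx (eq_sym y x) (negbTE ne) => /(_ erefl) exy.
by rewrite exy eqxx in ne.
Qed.

Lemma pnP g Y w : w \in pn eG g Y -> [/\ g \in Y, eG w g & forall v, v \in Y -> eG w v -> v = g].
Proof.
rewrite inE => /eqP H.
have : g \in Nb eG w :&: Y by rewrite H inE.
rewrite !inE => /andP [ewg gY]; split => // v vY ewv.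
have : v \in Nb eG w :&: Y by rewrite !inE ewv vY.
by rewrite H inE => /eqP.
Qed.

Lemma pn_nonempty Y y : is_tds eG Y -> #|Y| = #|D| -> y \in Y -> exists w, w \in pn eG y Y.
Proof.
move=> tY cY yY.
case: (pickP (fun w => w \in pn eG y Y)) => [w hw|none]; first by exists w.
exfalso.
have tY' : is_tds eG (Y :\ y).
  apply/eqP/setP => w; rewrite inE; apply/inNS.
  have : w \in NS eG Y by rewrite (eqP tY) inE.
  case/inNS => v vY ev.
  case: (eqVneq v y) => [evy|nvy]; last by exists v; rewrite // !inE nvy.
  subst v.
  case: (pickP (fun v' => (v' \in Y) && (v' != y) && eG v' w)) => [v' /andP [/andP [v'Y nv'] ev']|none2].
    by exists v'; rewrite // !inE nv'.
  have H : Nb eG w :&: Y == [set y].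
    apply/eqP/setP => u; rewrite !inE.
    case: (eqVneq u y) => [->|nu]; first by rewrite symG ev yY.
    have := none2 u; rewrite nu andbT /= => hu.
    by rewrite symG; apply/negbTE; apply/negP => /andP [a b]; rewrite b a in hu.
  by have := none w; rewrite /pn in_set H.
have := gt_le tY'; rewrite Dcard -cY (cardsD1 y Y) yY.
by rewrite add1n ltnn.
Qed.

Section GenT.
Variable T : {set VG}.
Hypothesis hT : S' \subset NS eG T.
Hypothesis hTc : #|T| <= #|S'|.

Lemma pn_S'' g w : g \in S'' -> w \in pn eG g (X T) ->
  w \in S'' /\ (forall h, (g,h) \in D -> (w,h) \in D).
Proof.
move=> gS /pnP [gX ewg uX].
have [h [gh ug]] := inS'' gS.
have wS : w \in S.
  apply/negPn/negP => wS.
  have [h1 ne] := h_other h.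
  have [g' g'h eg'] := F3 h1 wS.
  have g'X : g' \in X T by apply: S_X; apply/inS; exists h1.
  have eg : g' = g by apply: uX; rewrite // symG.
  by move: ne; rewrite (ug h1) ?eqxx // -eg.
case: (S_split wS) => [w1|w2].
  by move: (noS'S'' w1 gS); rewrite ewg.
split => //.
have [hw [wh uw]] := inS'' w2.
have [g' g'h eg'] := F2 w2 wh.
have g'X : g' \in X T by apply: S_X; apply/inS; exists hw.
have eg : g' = g by apply: uX; rewrite // symG.
subst g'; have ehw := ug _ g'h; subst hw.
by move=> h' /ug ->.
Qed.

Lemma Q1 w : w \in S'' -> exists2 g, g \in S'' & w \in pn eG g (X T).
Proof.
move=> wS.
have [cX _ _ _ _] := GL hT hTc.
have tX := X_tds hT.
pose pi g := odflt g [pick v | v \in pn eG g (X T)].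
have piP : forall g, g \in S'' -> pi g \in pn eG g (X T).
  move=> g gS; rewrite /pi; case: pickP => [v //|none].
  have [v hv] := pn_nonempty tX cX (S''_X T gS).
  by rewrite none in hv.
have sub : [set pi g | g in S''] \subset S''.
  by apply/subsetP => v /imsetP [g gS ->]; have [] := pn_S'' gS (piP g gS).
have ccard : #|[set pi g | g in S'']| = #|S''|.
  rewrite card_in_imset // => g1 g2 g1S g2S e.
  have := piP g1 g1S; have := piP g2 g2S; rewrite !inE -e => /eqP -> /eqP.
  by move/set1_inj.
have : [set pi g | g in S''] == S'' by rewrite eqEcard sub ccard leqnn.
move=> /eqP E; have : w \in [set pi g | g in S''] by rewrite E.
case/imsetP => [g gS ->].
by exists g => //; exact: piP.
Qed.
End GenT.

Definition T0 := Tof f0.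
Lemma T0_dom : S' \subset NS eG T0. Proof. by apply: Tof_dom => s _; exact: f0P. Qed.
Lemma T0_card : #|T0| <= #|S'|. Proof. exact: Tof_card. Qed.

Lemma partner w : w \in S'' -> exists g, [/\ g \in S'', eG w g,
  (forall h, (g,h) \in D -> (w,h) \in D) & forall v, v \in S'' -> eG w v -> v = g].
Proof.
move=> wS; have [g gS hw] := Q1 T0_dom T0_card wS.
have [_ ewg uX] := pnP hw.
exists g; split => //.
  by have [_ cl] := pn_S'' gS hw.
by move=> v vS; apply: uX; exact: S''_X.
Qed.

Lemma partner_class w h : w \in S'' -> (w,h) \in D -> exists g, [/\ g \in S'', eG w g,
  (g,h) \in D & forall v, v \in S'' -> eG w v -> v = g].
Proof.
move=> wS wh; have [g [gS ewg cl u]] := partner wS.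
exists g; split => //.
have [hg [gh _]] := inS'' gS.
by rewrite -(S''_uniq wS (cl _ gh) wh).
Qed.

Lemma partner_sym w g : w \in S'' -> g \in S'' -> eG w g -> forall v, v \in S'' -> eG g v -> v = w.
Proof.
move=> wS gS ewg v vS egv.
have [p [pS egp _ u]] := partner gS.
by rewrite (u v vS egv) (u w wS); rewrite // symG.
Qed.

Lemma partA : S :|: P = [set: VG].
Proof.
apply/setP => w; rewrite in_setU in_setT; case: (F1 w) => [->//|[s sS esw]].
apply/orP; case: (boolP (w \in S)) => wS; [by left | right].
by rewrite /P in_setD wS /=; apply/inNS; exists s.
Qed.

Lemma Dform : #|D| = 2 * #|S'| + #|S''|.
Proof. by have [_ _ _ _ ->] := GL T0_dom T0_card. Qed.

Lemma partB : gamma_t eG = 2 * #|S'| + #|S''|.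
Proof. by rewrite Dcard Dform. Qed.

Lemma partI x y z : x \in S' -> y \in S'' -> ~~ (eG x z && eG y z).
Proof.
move=> xS yS; apply/negP => /andP [exz eyz].
pose F s := if s == x then z else f0 s.
have hF : forall s, s \in S' -> eG s (F s).
  by move=> s _; rewrite /F; case: eqP => [->|_] //; exact: f0P.
have [g gS hp] := Q1 (Tof_dom hF) (Tof_card F) yS.
have [_ _ uX] := pnP hp.
have zX : z \in X (Tof F) by apply: T_X; apply/imsetP; exists x; rewrite // /F eqxx.
have ez := uX z zX eyz; subst z.
by move: (noS'S'' xS gS); rewrite exz.
Qed.

Lemma partE : exists k, isomorphic (induced eG S'') (kK2 k).
Proof.
apply: match_iso' => //; [exact: sG.1 | exact: sG.2 |].
move=> w wS; have [g [gS ewg _ u]] := partner wS; by exists g.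
Qed.

Lemma partF h : exists k, isomorphic (induced eG (S''_ h)) (kK2 k).
Proof.
apply: match_iso' => //; [exact: sG.1 | exact: sG.2 |].
move=> w /inS''_ [wS wh]; have [g [gS ewg gh u]] := partner_class wS wh.
exists g; split => //; first by apply/inS''_.
by move=> v /inS''_ [vS _]; exact: u.
Qed.

Lemma partG h : tdominates eG (S''_ h) (P'' :|: S''_ h).
Proof.
apply/subsetP => w; rewrite in_setU => /orP [wP|wS]; apply/inNS.
  move: wP; rewrite /P'' in_setD => /andP [nwS /inNS [y yS eyw]].
  have wS : w \notin S.
    apply/negP => /S_split [w1|w2]; last by rewrite w2 in nwS.
    by move: (noS'S'' w1 yS); rewrite symG eyw.
  have [g' g'h eg'] := F3 h wS.
  have g'S : g' \in S by apply/inS; exists h.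
  case: (S_split g'S) => [g1|g2].
    by move: (@partI g' y w g1 yS); rewrite eg' eyw.
  by exists g' => //; apply/inS''_.
move: wS => /inS''_ [wS wh]; have [g [gS ewg gh _]] := partner_class wS wh.
by exists g; [apply/inS''_ | rewrite symG].
Qed.

Lemma partH h x y z : x \in S''_ h -> y \in S''_ h -> x != y -> ~~ (eG x z && eG y z).
Proof.
move=> /inS''_ [xS xh] /inS''_ [yS yh] nxy; apply/negP => /andP [exz eyz].
have [x' [x'S exx' x'h ux]] := partner_class xS xh.
have [y' [y'S eyy' y'h uy]] := partner_class yS yh.
have ux' := partner_sym xS x'S exx'.
have uy' := partner_sym yS y'S eyy'.
have nxy' : x' != y'.
  apply: contra nxy => /eqP e; apply/eqP; symmetry; apply: ux' => //.
  by rewrite e symG.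
have [cX _ _ dis _] := GL T0_dom T0_card.
set X0 := X T0 in cX.
pose Y' := (X0 :\: [set x'; y']) :|: [set z].
have inY : forall v, v \in X0 -> v != x' -> v != y' -> v \in Y'.
  by move=> v vX n1 n2; rewrite /Y' in_setU in_setD in_set2 vX (negbTE n1) (negbTE n2).
have zY : z \in Y' by rewrite /Y' in_setU in_set1 eqxx orbT.
have tY : is_tds eG Y'.
  apply/eqP/setP => w; rewrite inE; apply/inNS.
  case: (eqVneq w x) => [->|nwx]; first by exists z; rewrite // symG.
  case: (eqVneq w y) => [->|nwy]; first by exists z; rewrite // symG.
  case: (boolP (w \in S)) => wS.
    case: (S_split wS) => [w1|w2].
      have fT : f0 w \in S' :|: T0 by rewrite in_setU (imset_f f0 w1) orbT.
      have fS := disjointFr dis fT.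
      exists (f0 w); last by rewrite symG f0P.
      apply: inY; first by apply: T_X; exact: imset_f.
        by apply/eqP => e; rewrite e x'S in fS.
      by apply/eqP => e; rewrite e y'S in fS.
    have [p [pS ewp _ up]] := partner w2.
    exists p; last by rewrite symG.
    apply: inY; first exact: S''_X.
      apply/eqP => e; subst p; by move: nwx; rewrite (ux' w w2) ?eqxx // symG.
    apply/eqP => e; subst p; by move: nwy; rewrite (uy' w w2) ?eqxx // symG.
  have [h1 ne] := h_other h.
  have [g' g'h eg'] := F3 h1 wS.
  have g'S : g' \in S by apply/inS; exists h1.
  exists g' => //; apply: inY; first exact: S_X.
    by apply/eqP => e; subst g'; move: ne; rewrite (S''_uniq x'S g'h x'h) eqxx.
  by apply/eqP => e; subst g'; move: ne; rewrite (S''_uniq y'S g'h y'h) eqxx.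
have := gt_le tY; rewrite Dcard -cX.
have [l1 _] := leq_card_setU (X0 :\: [set x'; y']) [set z].
have c2 := cardsID [set x'; y'] X0.
have sub : [set x'; y'] \subset X0.
  by apply/subsetP => v; rewrite in_set2 => /orP [] /eqP ->; apply: S''_X.
rewrite (setIidPr sub) cards2 nxy' cards1 in c2 l1.
rewrite /Y' => hh; move: (leq_trans hh l1); rewrite -c2 addnC leq_add2l.
by [].
Qed.

Lemma partJ : ([/\ [disjoint S' & S''], [disjoint S' & P'] & [disjoint S' & P'']] /\
             [/\ [disjoint S'' & P'], [disjoint S'' & P''] & [disjoint P' & P'']]).
Proof.
split; split; apply: disjP => x.
- exact: S'S''_disj.
- by rewrite /P' in_setD => ->.
- rewrite /P'' in_setD => xS /andP [_ /inNS [v vS evx]].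
  by move: (noS'S'' xS vS); rewrite symG evx.
- rewrite /P' in_setD => xS /andP [_ /inNS [v vS evx]].
  by move: (noS'S'' vS xS); rewrite evx.
- by rewrite /P'' in_setD => ->.
- rewrite /P' /P'' !in_setD => /andP [_ /inNS [v vS evx]] /andP [_ /inNS [u uS eux]].
  by move: (@partI v u x vS uS); rewrite evx eux.
Qed.

Lemma partE' T' : tdominates eG T' S' ->
  (forall T2 : {set VG}, tdominates eG T2 S' -> #|T'| <= #|T2|) ->
  [/\ T' \subset P', #|T'| = #|S'|, is_min_tds eG (X T') &
      forall g, g \in S'' -> pn eG g (X T') \subset S'' /\ #|pn eG g (X T')| = 1].
Proof.
move=> hT hmin.
have hc : #|T'| <= #|S'| := leq_trans (hmin _ T0_dom) T0_card.
have [cX cT d1 d2 _] := GL hT hc.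
split => //.
- apply/subsetP => t tT; rewrite /P' in_setD (disjointFl d1 tT) /=.
  apply/negPn/negP => nt.
  have hT2 : tdominates eG (T' :\ t) S'.
    apply/subsetP => s sS; have /inNS [v vT ev] := subsetP hT s sS.
    apply/inNS; exists v => //; rewrite in_setD1 vT andbT; apply/eqP => e; subst v.
    by apply: (negP nt); apply/inNS; exists s; rewrite // symG.
  have := hmin _ hT2; rewrite (cardsD1 t T') tT.
  by rewrite add1n ltnn.
- by apply/andP; split; [exact: X_tds hT | rewrite Dcard cX].
move=> g gS; have [g' [g'S egg' _ ug]] := partner gS.
have E : pn eG g (X T') = [set g'].
  apply/setP => w; rewrite in_set1; apply/idP/eqP.
    move=> hw; have [wS _] := pn_S'' gS hw; have [_ ewg _] := pnP hw.
    by apply: ug => //; rewrite symG.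
  move=> ->; have [g2 g2S hp] := Q1 hT hc g'S.
  have [_ _ uX] := pnP hp.
  have eg : g = g2 by apply: uX; [exact: S''_X | rewrite symG].
  by rewrite eg.
rewrite E cards1; split => //; apply/subsetP => v; rewrite in_set1 => /eqP ->.
exact: g'S.
Qed.

Lemma Klow Z : S' :|: P' \subset NS eG Z -> 2 * #|S'| <= #|Z|.
Proof.
move=> hZ.
have tY : is_tds eG (Z :|: S'').
  apply/eqP/setP => w; rewrite inE; apply/inNS.
  case: (boolP (w \in S' :|: P')) => wW.
    have /inNS [v vZ ev] := subsetP hZ w wW.
    by exists v => //; rewrite in_setU vZ.
  case: (boolP (w \in S'')) => wS''.
    have [p [pS ewp _ _]] := partner wS''.
    by exists p; rewrite ?in_setU ?pS ?orbT // symG.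
  case: (F1 w) => [wS|[s sS esw]].
    case: (S_split wS) => [w1|w2]; last by rewrite w2 in wS''.
    by rewrite in_setU w1 in wW.
  case: (S_split sS) => [s1|s2]; last by exists s; rewrite // in_setU s2 orbT.
  case/negP: wW; rewrite in_setU /P' in_setD; case: (w \in S') => //=.
  by apply/inNS; exists s.
have := gt_le tY; rewrite Dcard Dform.
have [l1 _] := leq_card_setU Z S''.
move=> hh; move: (leq_trans hh l1); by rewrite leq_add2r.
Qed.

Lemma partK : gamma_t (induced eG (S' :|: P')) = 2 * #|S'| /\
              gamma (induced eG (S' :|: P')) = #|S'|.
Proof.
have [_ _ d1 _ _] := GL T0_dom T0_card.
split.
  apply: ind_gt_eq; last by move=> Z _ hZ; exact: Klow hZ.
  exists (S' :|: T0); split.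
  - apply/subsetP => v; rewrite in_setU => /orP [vS|vT]; rewrite in_setU ?vS //.
    rewrite /P' in_setD (disjointFl d1 vT) /=.
    case/imsetP: vT => s sS ->; apply/inNS; exists s => //; exact: f0P.
  - apply/subsetP => v; rewrite in_setU => /orP [vS|vP].
      apply/inNS; exists (f0 v); last by rewrite symG f0P.
      by rewrite in_setU (imset_f f0 vS) orbT.
    move: vP; rewrite /P' in_setD => /andP [_ vN].
    by apply: (subsetP (NS_mono _ (subsetUl S' T0))).
  - have [l1 _] := leq_card_setU S' T0.
    apply: (leq_trans l1); rewrite mul2n -addnn leq_add2l; exact: T0_card.
apply: ind_g_eq.
  exists S'; split => //; first exact: subsetUl.
  apply/subsetP => v; rewrite in_setU => /orP [vS|vP]; rewrite in_setU ?vS //.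
  by move: vP; rewrite /P' in_setD => /andP [_ ->]; rewrite orbT.
move=> Z _ hZ.
pose Z2 := Z :|: [set f0 z | z in Z].
have hZ2 : S' :|: P' \subset NS eG Z2.
  apply/subsetP => w wW; have := subsetP hZ w wW; rewrite in_setU => /orP [wZ|wN].
    apply/inNS; exists (f0 w); last by rewrite symG f0P.
    by rewrite in_setU (imset_f f0 wZ) orbT.
  exact: (subsetP (NS_mono _ (subsetUl Z _))).
have := Klow hZ2.
have [l1 _] := leq_card_setU Z [set f0 z | z in Z].
have l2 := leq_imset_card f0 Z.
move=> hh.
have h3 : 2 * #|S'| <= 2 * #|Z|.
  by apply: (leq_trans (leq_trans hh l1)); rewrite mul2n -addnn leq_add2l.
by rewrite leq_pmul2l in h3.
Qed.

Lemma partL : gamma_t (induced eG (S'' :|: P'')) = #|S''|.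
Proof.
apply: ind_gt_eq.
  exists S''; split => //; first exact: subsetUl.
  apply/subsetP => v; rewrite in_setU => /orP [vS|vP].
    have [p [pS evp _ _]] := partner vS.
    by apply/inNS; exists p; rewrite // symG.
  by move: vP; rewrite /P'' in_setD => /andP [_ ->].
move=> Z _ hZ.
have tY : is_tds eG (Z :|: (S' :|: T0)).
  apply/eqP/setP => w; rewrite inE; apply/inNS.
  case: (boolP (w \in S'' :|: P'')) => wW.
    have /inNS [v vZ ev] := subsetP hZ w wW.
    by exists v => //; rewrite in_setU vZ.
  case: (boolP (w \in S')) => w1.
    exists (f0 w); last by rewrite symG f0P.
    by rewrite !in_setU (imset_f f0 w1) !orbT.
  case: (boolP (w \in NS eG S')) => wN.
    case/inNS: wN => s sS esw; by exists s; rewrite // !in_setU sS orbT.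
  exfalso.
  case: (F1 w) => [wS|[s sS esw]].
    case: (S_split wS) => [w1'|w2]; first by rewrite w1' in w1.
    by rewrite in_setU w2 in wW.
  case: (S_split sS) => [s1|s2].
    by case/negP: wN; apply/inNS; exists s.
  case/negP: wW; rewrite in_setU /P'' in_setD.
  case: (w \in S'') => //=; apply/inNS; by exists s.
have := gt_le tY; rewrite Dcard Dform.
have [l1 _] := leq_card_setU Z (S' :|: T0).
have [l2 _] := leq_card_setU S' T0.
have l3 := T0_card.
move=> hh.
have : 2 * #|S'| + #|S''| <= #|Z| + 2 * #|S'|.
  apply: (leq_trans hh); apply: (leq_trans l1); rewrite leq_add2l.
  by apply: (leq_trans l2); rewrite mul2n -addnn leq_add2l.
by rewrite addnC leq_add2r.
Qed.

Lemma partM : ~ isomorphic eH (kK2 1) -> S' = set0.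
Proof.
move=> nI; apply/eqP/negPn/negP => /set0Pn [s sS]; apply: nI.
have [_ _ d1 d2 _] := GL T0_dom T0_card.
set t := f0 s.
have tT : t \in T0 := imset_f f0 sS.
have tS1 : t \notin S' by rewrite (disjointFl d1 tT).
have tS2 : t \notin S''.
  by rewrite (disjointFr d2) // in_setU tT orbT.
have tS : t \notin S by apply/negP => /S_split [] h; [rewrite h in tS1 | rewrite h in tS2].
have allD : forall h, (s,h) \in D.
  move=> h; have [g' g'h eg'] := F3 h tS.
  have g'S : g' \in S by apply/inS; exists h.
  case: (S_split g'S) => [g1|g2].
    case: (eqVneq s g') => [e|ne]; first by rewrite e.
    by move: (@S'_nocommon s g' t sS g1 ne); rewrite f0P eg'.
  by move: (@partI s g' t sS g2); rewrite f0P eg'.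
have cv := cnt_geV allD.
have eD' : #|D'| = 2 * #|S'|.
  by move: Dform; rewrite card_D card_D'' => /eqP; rewrite eqn_add2r => /eqP.
have rest : 2 * #|S' :\ s| <= \sum_(i in S' :\ s) cnt i.
  rewrite mulnC -sum_nat_const; apply: leq_sum => i; rewrite in_setD1 => /andP [_ iS].
  exact: cnt_ge2.
have VH2 : #|VH| <= 2.
  move: eD'; rewrite card_D'_sum (big_setD1 s sS) /= (cardsD1 s S') sS => e.
  have : #|VH| + 2 * #|S' :\ s| <= 2 * (1 + #|S' :\ s|).
    by rewrite -e; apply: leq_add.
  by rewrite mulnDr muln1 leq_add2r.
have [b eab] := iH h00.
have nab : b != h00 by apply: contraTneq eab => ->; rewrite irrH.
have ab : forall x, x = h00 \/ x = b.
  move=> x; case: (eqVneq x h00) => [->|nxa]; [by left|right].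
  apply/eqP; apply: contraT => nxb.
  have : #|x |: [set h00; b]| <= #|VH| by exact: max_card.
  have -> : #|x |: [set h00; b]| = 3.
    by rewrite cardsU1 cards2 eq_sym nab in_set2 (negbTE nxa) (negbTE nxb).
  by move=> h3; move: (leq_trans h3 VH2).
exists (fun x => (ord0 : 'I_1, x == h00)); split.
  exists (fun p : 'I_1 * bool => if p.2 then h00 else b).
    by move=> x /=; case: (eqVneq x h00) => [->|nxa] //=; case: (ab x) => // e; rewrite e eqxx in nxa.
  move=> [i c] /=; rewrite (ord1 i); case: c => /=; first by rewrite eqxx.
  by rewrite (negbTE nab).
move=> x y; rewrite /kK2 /=.
have eba : eH b h00 by rewrite sH.1.
case: (ab x) => ->; case: (ab y) => ->; rewrite ?eqxx ?(negbTE nab) ?irrH //.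
Qed.

Lemma main_conj :
  S :|: P = [set: VG] /\
  gamma_t eG = 2 * #|S'| + #|S''| /\
  (forall x y, x \in S' -> y \in S' -> ~~ eG x y) /\
            (forall x y z, x \in S' -> y \in S' -> x != y -> ~~ (eG x z && eG y z)) /\
  (forall x y, x \in S' -> y \in S'' -> ~~ eG x y) /\
  (exists k, isomorphic (induced eG S'') (kK2 k)) /\
  (forall T' : {set VG}, tdominates eG T' S' ->
               (forall T2 : {set VG}, tdominates eG T2 S' -> #|T'| <= #|T2|) ->
               let X := S' :|: T' :|: S'' in
               [/\ T' \subset P', #|T'| = #|S'|, is_min_tds eG X &
                   forall g, g \in S'' -> pn eG g X \subset S'' /\ #|pn eG g X| = 1]) /\
  (forall h : VH, exists k, isomorphic (induced eG (S''_ h)) (kK2 k)) /\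
  (forall h : VH, tdominates eG (S''_ h) (P'' :|: S''_ h)) /\
  (forall (h : VH) x y z, x \in S''_ h -> y \in S''_ h -> x != y ->
               ~~ (eG x z && eG y z)) /\
  (forall x y z, x \in S' -> y \in S'' -> ~~ (eG x z && eG y z)) /\
  ([/\ [disjoint S' & S''], [disjoint S' & P'] & [disjoint S' & P'']] /\
             [/\ [disjoint S'' & P'], [disjoint S'' & P''] & [disjoint P' & P'']]) /\
  (gamma_t (induced eG (S' :|: P')) = 2 * gamma (induced eG (S' :|: P')) /\
             2 * gamma (induced eG (S' :|: P')) = 2 * #|S'|) /\
  gamma_t (induced eG (S'' :|: P'')) = #|S''| /\
  (~ isomorphic eH (kK2 1) -> S' = set0).
Proof.
have [K1 K2] := partK.
split; first exact: partA.
split; first exact: partB.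
split; first exact: S'_indep.
split; first exact: S'_nocommon.
split; first exact: noS'S''.
split; first exact: partE.
split; first exact: partE'.
split; first exact: partF.
split; first exact: partG.
split; first exact: partH.
split; first exact: partI.
split; first exact: partJ.
split; first by rewrite K1 K2.
split; first exact: partL.
exact: partM.
Qed.
End Main.

Theorem proposition3 (VG VH : finType) (eG : rel VG) (eH : rel VH)
  (sG : simple_graph eG) (sH : simple_graph eH)
  (cG : connected eG) (cH : connected eH)
  (iG : no_isolated eG) (iH : no_isolated eH)
  (gH : gamma_t eH = 2)
  (gGH : gamma_t eG = gamma_t (cartesian eG eH))
  (D : {set VG * VH}) (hD : is_min_tds (cartesian eG eH) D) :
  let D' := [set p in D | [exists h' : VH, (h' != p.2) && ((p.1, h') \in D)]] in
  let D'' := D :\: D' in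
  let D''_ := fun h : VH => [set p in D'' | p.2 == h] in
  let S := [set p.1 | p in D] in
  let S' := [set p.1 | p in D'] in
  let S'' := [set p.1 | p in D''] in
  let S''_ := fun h : VH => [set p.1 | p in D''_ h] in
  let P := NS eG S :\: S in
  let P' := NS eG S' :\: S' in
  let P'' := NS eG S'' :\: S'' in
  (* (A) *) S :|: P = [set: VG] /\
  (* (B) *) gamma_t eG = 2 * #|S'| + #|S''| /\
  (* (C) *) (forall x y, x \in S' -> y \in S' -> ~~ eG x y) /\
            (forall x y z, x \in S' -> y \in S' -> x != y -> ~~ (eG x z && eG y z)) /\
  (* (D) *) (forall x y, x \in S' -> y \in S'' -> ~~ eG x y) /\
  (* (E) *) (exists k, isomorphic (induced eG S'') (kK2 k)) /\
  (* (E') *) (forall T' : {set VG}, tdominates eG T' S' ->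
               (forall T2 : {set VG}, tdominates eG T2 S' -> #|T'| <= #|T2|) ->
               let X := S' :|: T' :|: S'' in
               [/\ T' \subset P', #|T'| = #|S'|, is_min_tds eG X &
                   forall g, g \in S'' -> pn eG g X \subset S'' /\ #|pn eG g X| = 1]) /\
  (* (F) *) (forall h : VH, exists k, isomorphic (induced eG (S''_ h)) (kK2 k)) /\
  (* (G) *) (forall h : VH, tdominates eG (S''_ h) (P'' :|: S''_ h)) /\
  (* (H) *) (forall (h : VH) x y z, x \in S''_ h -> y \in S''_ h -> x != y ->
               ~~ (eG x z && eG y z)) /\
  (* (I) *) (forall x y z, x \in S' -> y \in S'' -> ~~ (eG x z && eG y z)) /\
  (* (J) *) ([/\ [disjoint S' & S''], [disjoint S' & P'] & [disjoint S' & P'']] /\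
             [/\ [disjoint S'' & P'], [disjoint S'' & P''] & [disjoint P' & P'']]) /\
  (* (K) *) (gamma_t (induced eG (S' :|: P')) = 2 * gamma (induced eG (S' :|: P')) /\
             2 * gamma (induced eG (S' :|: P')) = 2 * #|S'|) /\
  (* (L) *) gamma_t (induced eG (S'' :|: P'')) = #|S''| /\
  (* (M) *) (~ isomorphic eH (kK2 1) -> S' = set0).
Proof.
have : 0 < #|VH| by have := gt_leT eH; rewrite gH; case: #|VH|.
case/card_gt0P => h00 _.
move/andP: hD => [Dtds /eqP Dc].
have Dcard : gamma_t eG = #|D| by rewrite gGH Dc.
exact: (main_conj sG sH iG iH h00 Dtds Dcard).
Qed.
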